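(* Let $k\ge1$ and $\ell\ge1$. Then $$\{n\in A_{2k}:\max\mathcal{CG}(n)=\max\mathcal{CG}_2(n)=F_{2k+2\ell}\}=\Big\{m+2F_{2k+2\ell}\ :\ m\in A_{2k},\ m\le\sum_{i=0}^{\ell-1}F_{2k+2i}\Big\}.$$
   Context: Fibonacci numbers: $F_1=F_2=1$, $F_{n+1}=F_n+F_{n-1}$ for $n\ge2$. Chung–Graham decomposition: every positive integer $n$ has a unique representation $n=\sum_{i\ge1}c_iF_{2i}$ with $c_i\in\{0,1,2\}$, only finitely many nonzero, such that whenever $c_i=c_j=2$ with $i<j$ there is $k$ with $i<k<j$ and $c_k=0$. Let $\mathcal{CG}(n)$ be the set of $F_{2i}$ with $c_i\neq0$, $\mathcal{CG}_1(n)$ the set of $F_{2i}$ with $c_i=1$, and $\mathcal{CG}_2(n)$ the set of $F_{2i}$ with $c_i=2$. For $k\ge1$, $A_{2k}=\{n\ge1:\min\mathcal{CG}(n)=F_{2k}\}$. *)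

(* Defs.v *)
From mathcomp Require Import all_boot.
Set Implicit Arguments. Unset Strict Implicit. Unset Printing Implicit Defensive.

Fixpoint fib (n : nat) : nat :=
  match n with
  | 0 => 0
  | 1 => 1
  | (m.+1 as p).+1 => fib p + fib m
  end.

(* A candidate Chung–Graham coefficient vector for n: c : 'I_N -> 'I_3, where
   the entry at index i (0-based) is the coefficient c_{i+1} of F_{2(i+1)}. *)
Definition cg_value (N : nat) (c : {ffun 'I_N -> 'I_3}) : nat :=
  \sum_(i < N) (c i : nat) * fib (2 * i.+1).

Definition cg_valid (N : nat) (c : {ffun 'I_N -> 'I_3}) : bool :=
  [forall i : 'I_N, forall j : 'I_N,
     ((i < j) && ((c i : nat) == 2) && ((c j : nat) == 2)) ==>
     [exists k : 'I_N, (i < k) && (k < j) && ((c k : nat) == 0)]].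

(* Since F_{2i} >= i for i >= 1, any
   nonzero coefficient c_i of a decomposition of n has i <= n, so the
   decomposition is a coefficient vector of length n.  By the (cited)
   existence-and-uniqueness theorem, the pick below returns THE decomposition. *)
Definition cg_coeffs (n : nat) : option {ffun 'I_n -> 'I_3} :=
  [pick c : {ffun 'I_n -> 'I_3} | cg_valid c && (cg_value c == n)].

(* cg n i = c_i, the coefficient of F_{2i} (i >= 1) in the decomposition of n. *)
Definition cg (n i : nat) : nat :=
  match cg_coeffs n with
  | Some c => if i is i'.+1 then
                (if insub i' is Some j then (c j : nat) else 0)
              else 0
  | None => 0
  end.

Definition CG (n : nat) : seq nat :=
  [seq fib (2 * i) | i <- iota 1 n & cg n i != 0].
Definition CG1 (n : nat) : seq nat :=
  [seq fib (2 * i) | i <- iota 1 n & cg n i == 1].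
Definition CG2 (n : nat) : seq nat :=
  [seq fib (2 * i) | i <- iota 1 n & cg n i == 2].

Definition is_min (s : seq nat) (x : nat) : Prop :=
  x \in s /\ forall y, y \in s -> x <= y.
Definition is_max (s : seq nat) (x : nat) : Prop :=
  x \in s /\ forall y, y \in s -> y <= x.

Definition A (k n : nat) : Prop := 0 < n /\ is_min (CG n) (fib (2 * k)).

(* Main.v *)
Require Import Defs.
From mathcomp Require Import all_boot zify.
From Stdlib Require Import FunctionalExtensionality.
Set Implicit Arguments. Unset Strict Implicit. Unset Printing Implicit Defensive.

Lemma fibSS x : fib x.+2 = fib x.+1 + fib x. Proof. by []. Qed.
Lemma fib_le_S x : fib x <= fib x.+1.
Proof. case: x => // x; rewrite fibSS; lia. Qed.
Lemma fib_mono m n : m <= n -> fib m <= fib n.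
Proof.
move=> h; rewrite -(subnK h); elim: (n - m) => [|d IH]; first by rewrite add0n.
rewrite addSn; exact: leq_trans IH (fib_le_S _).
Qed.
Lemma fib_pos n : 0 < n -> 0 < fib n.
Proof. move=> h; exact: leq_trans (fib_mono h). Qed.
Lemma fib2_lt i j : i < j -> fib (2*i) < fib (2*j).
Proof.
move=> h; have h1 := fib_pos (ltn0Sn (2*i)).
have h2 : fib (2*i).+2 <= fib (2*j) by apply: fib_mono; lia.
rewrite fibSS in h2; lia.
Qed.
Lemma fib2_inj i j : fib (2*i) = fib (2*j) -> i = j.
Proof.
move=> e; case: (ltngtP i j) => // h; have := fib2_lt h; lia.
Qed.
Lemma fib2_ge i : i <= fib (2*i).
Proof.
elim: i => // i IH; rewrite (_ : 2 * i.+1 = (2*i).+2); last lia.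
rewrite fibSS; have := fib_pos (ltn0Sn (2*i)); lia.
Qed.

Definition V (f : nat -> nat) j := \sum_(i < j.+1) f i * fib (2 * i).
Lemma V0 f : V f 0 = 0.
Proof. by rewrite /V big_ord1 /= muln0. Qed.
Lemma VS f j : V f j.+1 = V f j + f j.+1 * fib (2 * j.+1).
Proof. by rewrite /V big_ord_recr. Qed.
Lemma V_ext f g j : (forall i, i <= j -> f i = g i) -> V f j = V g j.
Proof. move=> H; apply: eq_bigr => i _; congr (_ * _); apply: H; rewrite -ltnS; exact: ltn_ord. Qed.
Lemma V_ge f j i : i <= j -> f i * fib (2*i) <= V f j.
Proof.
elim: j => [|j IH] hi.
  by move: hi; rewrite leqn0 => /eqP ->; rewrite V0 (_ : fib (2*0) = 0) // muln0.
rewrite VS; move: hi; rewrite leq_eqVlt => /orP[/eqP->|hi]; first lia.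
have := IH hi; lia.
Qed.
Lemma V_zero_above f j d : (forall i, j < i -> f i = 0) -> V f (j + d) = V f j.
Proof.
move=> H; elim: d => [|d IH]; first by rewrite addn0.
by rewrite addnS VS IH H ?mul0n ?addn0 //; lia.
Qed.
Lemma V_stable f a b : (forall i, a < i -> f i = 0) -> (forall i, b < i -> f i = 0) ->
  V f a = V f b.
Proof.
move=> Ha Hb; case: (leqP a b) => h.
  by rewrite -(subnKC h) V_zero_above.
by rewrite -(subnKC (ltnW h)) V_zero_above.
Qed.
Lemma V_zero f j : (forall i, i <= j -> f i = 0) -> V f j = 0.
Proof. move=> H; apply: big1 => i _; rewrite H ?mul0n // -ltnS; exact: ltn_ord. Qed.

Definition valid (f : nat -> nat) := forall i i', i < i' -> f i = 2 -> f i' = 2 ->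
  exists t, i < t < i' /\ f t = 0.
Definition closed (f : nat -> nat) j := forall i, i <= j -> f i = 2 ->
  exists t, i < t <= j /\ f t = 0.

Lemma closed_down f j : closed f j.+1 -> f j.+1 != 0 -> closed f j.
Proof.
move=> hc hn i hi fi; have [t [ht ft]] := hc i (leqW hi) fi; exists t; split=> //.
case: (eqVneq t j.+1) => [e|ne]; first by rewrite -e ft in hn.
lia.
Qed.
Lemma closed_top f j : closed f j.+1 -> f j.+1 != 2.
Proof. move=> hc; apply/eqP => h; have [t [ht _]] := hc j.+1 (leqnn _) h; lia. Qed.
Lemma valid_closed f j : valid f -> f j.+1 = 2 -> closed f j.
Proof.
move=> hv h i hi fi; have [t [ht ft]] := hv i j.+1 (hi : i < j.+1) fi h.
exists t; split=> //; lia.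
Qed.

Lemma Bnd f : (forall i, f i <= 2) -> valid f -> forall j,
  V f j < fib (2*j).+2 /\ (closed f j -> V f j < fib (2*j).+1).
Proof.
move=> hb hv; elim=> [|j [IH1 IH2]]; first by rewrite V0.
rewrite VS (_ : 2 * j.+1 = (2*j).+2); last lia.
have e4 := fibSS (2*j).+2; have e3 := fibSS (2*j).+1; have e2 := fibSS (2*j).
have hf : f j.+1 = 0 \/ f j.+1 = 1 \/ f j.+1 = 2 by have := hb j.+1; lia.
split.
  case: hf => [->|[->|e]]; try lia.
  have := IH2 (valid_closed hv e); rewrite e; lia.
move=> hc; have := closed_top hc; case: hf => [->|[e|->]] //; first lia.
have hn : f j.+1 != 0 by rewrite e.
have := IH2 (closed_down hc hn); rewrite e; lia.
Qed.
Lemma step_lt f g N : (forall i, f i <= 2) -> valid f -> f N.+1 < g N.+1 ->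
  V f N.+1 < V g N.+1.
Proof.
move=> hb hv h; have [B _] := Bnd hb hv N.
rewrite !VS (_ : 2 * N.+1 = (2*N).+2); last lia.
have : (f N.+1).+1 * fib (2*N).+2 <= g N.+1 * fib (2*N).+2 by rewrite leq_mul2r h orbT.
rewrite mulSn; lia.
Qed.

Lemma uniq_rep f g : (forall i, f i <= 2) -> (forall i, g i <= 2) -> valid f -> valid g ->
  forall N, V f N = V g N -> forall i, 0 < i <= N -> f i = g i.
Proof.
move=> hf hg vf vg; elim=> [|N IH] e i hi; first lia.
have eN : f N.+1 = g N.+1.
  case: (ltngtP (f N.+1) (g N.+1)) => // h.
    by have := step_lt hf vf h; rewrite e ltnn.
  by have := step_lt hg vg h; rewrite e ltnn.
case: (eqVneq i N.+1) => [->//|ne].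
apply: IH; last lia.
by move: e; rewrite !VS eN => /addIn.
Qed.

Definition coef N (c : {ffun 'I_N -> 'I_3}) (i : nat) : nat :=
  if i is i'.+1 then (if insub i' is Some j then (c j : nat) else 0) else 0.

Lemma coefS N (c : {ffun 'I_N -> 'I_3}) (i : 'I_N) : coef c i.+1 = c i.
Proof.
rewrite /coef; case: insubP => [u _ e|]; last by rewrite ltn_ord.
by rewrite (_ : u = i) //; apply: val_inj.
Qed.
Lemma coefS' N (c : {ffun 'I_N -> 'I_3}) i (hi : i < N) : coef c i.+1 = c (Ordinal hi).
Proof. exact: (coefS c (Ordinal hi)). Qed.
Lemma coef_big N (c : {ffun 'I_N -> 'I_3}) i : N < i -> coef c i = 0.
Proof.
rewrite /coef; case: i => // i h; case: insubP => // u _ e.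
have := ltn_ord u; rewrite e; lia.
Qed.
Lemma coef_le2 N (c : {ffun 'I_N -> 'I_3}) i : coef c i <= 2.
Proof. rewrite /coef; case: i => // i; case: insubP => // u _ _; rewrite -ltnS; exact: ltn_ord. Qed.
Lemma value_coef N (c : {ffun 'I_N -> 'I_3}) : cg_value c = V (coef c) N.
Proof.
rewrite /cg_value /V [RHS]big_ord_recl [X in X + _](_ : _ = 0) // add0n; apply: eq_bigr => i _.
by rewrite lift0 coefS.
Qed.

Lemma valid_coef N (c : {ffun 'I_N -> 'I_3}) : cg_valid c -> valid (coef c).
Proof.
move=> /forallP H i i' hii'.
have c0 : coef c 0 = 0 by [].
case: i hii' => [|i] hii'; first by rewrite c0.
case: i' hii' => [|i'] hii'; first by rewrite c0.
case: (ltnP i N) => hi; last by rewrite coef_big.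
case: (ltnP i' N) => hi'; last by rewrite (@coef_big _ _ i'.+1).
rewrite (coefS' c hi) (coefS' c hi') => e1 e2.
have := H (Ordinal hi) => /forallP /(_ (Ordinal hi')) /implyP.
rewrite /= -ltnS hii' e1 e2 => /(_ isT) /existsP [t /andP [/andP [h1 h2] /eqP h3]].
exists t.+1; split; first by rewrite !ltnS h1 h2.
by rewrite coefS h3.
Qed.

Lemma coef_valid N (c : {ffun 'I_N -> 'I_3}) : valid (coef c) -> cg_valid c.
Proof.
move=> H; apply/forallP => i; apply/forallP => j; apply/implyP => /andP[/andP[hij /eqP hi] /eqP hj].
have [t [ht ft]] : exists t, i.+1 < t < j.+1 /\ coef c t = 0.
  by apply: H => //; rewrite coefS.
case: t ht ft => [|t] ht ft; first lia.
have htN : t < N by have := ltn_ord j; lia.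
apply/existsP; exists (Ordinal htN); rewrite /= -(coefS' c htN) ft eqxx andbT.
lia.
Qed.
Lemma cgE n i : cg n i = match cg_coeffs n with Some d => coef d i | None => 0 end.
Proof. by rewrite /cg; case: (cg_coeffs n). Qed.

Lemma cg_char n f : f 0 = 0 -> (forall i, f i <= 2) -> (forall i, n < i -> f i = 0) ->
  valid f -> V f n = n -> cg n = f.
Proof.
move=> f0 fb fz fv fV.
pose c : {ffun 'I_n -> 'I_3} := [ffun i : 'I_n => inord (f i.+1)].
have cE : forall i, coef c i = f i.
  case=> [|i]; first by rewrite f0.
  case: (ltnP i n) => hi; last by rewrite coef_big ?fz.
  by rewrite (coefS' c hi) ffunE inordK // ltnS.
have cP : cg_valid c && (cg_value c == n).
  have cf : coef c = f by apply: functional_extensionality.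
  rewrite coef_valid; last by rewrite cf.
  by rewrite value_coef cf fV eqxx.
apply: functional_extensionality => i.
rewrite cgE /cg_coeffs; case: pickP => [d /andP[dv /eqP dV] | H]; last first.
  by have := H c; rewrite cP.
case: i => [|i]; first by rewrite f0.
case: (ltnP n i.+1) => hi; first by rewrite coef_big ?fz.
rewrite -cE; apply: (uniq_rep (@coef_le2 _ d) (@coef_le2 _ c) (valid_coef dv) (valid_coef (proj1 (andP cP))) (N := n)) => //.
by rewrite -!value_coef dV; move/andP: cP => [_ /eqP].
Qed.

Lemma cg_spec n : [/\ (forall i, cg n i <= 2), cg n 0 = 0, (forall i, n < i -> cg n i = 0),
  valid (cg n) & ((exists i, cg n i <> 0) -> V (cg n) n = n)].
Proof.
have E := cgE n; move: E; rewrite /cg_coeffs; case: pickP => [d /andP[dv /eqP dV]|_] E.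
  have -> : cg n = coef d by apply: functional_extensionality.
  split => //; [exact: coef_le2 | exact: coef_big | exact: valid_coef | by rewrite -value_coef].
have -> : cg n = fun _ => 0 by apply: functional_extensionality.
split => //; try (by move=> i i' _ e); by move=> [i h]; case: h.
Qed.

Lemma memCG (p : pred nat) n x : (forall i, p i -> 0 < i <= n) ->
  (x \in [seq fib (2 * i) | i <- iota 1 n & p i]) <-> exists i, p i /\ x = fib (2*i).
Proof.
move=> H; split.
  by move/mapP=> [i]; rewrite mem_filter => /andP[pi _] ->; exists i.
move=> [i [pi ->]]; apply/mapP; exists i => //; rewrite mem_filter pi mem_iota /=.
have := H i pi; lia.
Qed.

Lemma min_iff (p : pred nat) n k : (forall i, p i -> 0 < i <= n) ->
  is_min [seq fib (2 * i) | i <- iota 1 n & p i] (fib (2*k)) <-> p k /\ (forall i, p i -> k <= i).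
Proof.
move=> H; split.
  move=> [/(memCG _ H) [i [pi /fib2_inj ->]] hm]; split => // j pj.
  have := hm (fib (2*j)); rewrite memCG //; move=> /(_ (ex_intro _ j (conj pj erefl))) h.
  case: (leqP i j) => // hji; have := fib2_lt hji; lia.
move=> [pk hk]; split; first by apply/(memCG _ H); exists k.
move=> y /(memCG _ H) [i [pi ->]]; apply: fib_mono; have := hk i pi; lia.
Qed.

Lemma max_iff (p : pred nat) n k : (forall i, p i -> 0 < i <= n) ->
  is_max [seq fib (2 * i) | i <- iota 1 n & p i] (fib (2*k)) <-> p k /\ (forall i, p i -> i <= k).
Proof.
move=> H; split.
  move=> [/(memCG _ H) [i [pi /fib2_inj ->]] hm]; split => // j pj.
  have := hm (fib (2*j)); rewrite memCG //; move=> /(_ (ex_intro _ j (conj pj erefl))) h.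
  case: (leqP j i) => // hji; have := fib2_lt hji; lia.
move=> [pk hk]; split; first by apply/(memCG _ H); exists k.
move=> y /(memCG _ H) [i [pi ->]]; apply: fib_mono; have := hk i pi; lia.
Qed.

Lemma sumrecr (F : nat -> nat) l : \sum_(0 <= i < l.+1) F i = \sum_(0 <= i < l) F i + F l.
Proof. by rewrite big_nat_recr. Qed.

Lemma sum_id k' l : \sum_(0 <= i < l) fib (2 * k'.+1 + 2 * i) + fib (2*k').+1 = fib (2*(k'+l)).+1.
Proof.
elim: l => [|l IH]; first by rewrite big_geq // addn0.
rewrite sumrecr (_ : 2 * k'.+1 + 2 * l = (2*(k'+l)).+2); last lia.
rewrite (_ : 2 * (k' + l.+1) = (2*(k'+l)).+2); last lia.
rewrite (fibSS (2*(k'+l)).+1) fibSS; lia.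
Qed.

Lemma B2' f k' : (forall i, f i <= 2) -> valid f -> (forall i, i <= k' -> f i = 0) ->
  forall d, closed f (k'+d) -> V f (k'+d) + fib (2*k').+1 <= fib (2*(k'+d)).+1.
Proof.
move=> hb hv hz; elim=> [|d IH] hc; first by rewrite addn0 V_zero.
rewrite addnS VS in hc *; set j := k' + d in IH hc *.
rewrite (_ : 2 * j.+1 = (2*j).+2); last lia.
have e3 := fibSS (2*j).+1; have e2 := fibSS (2*j).
have hm : fib (2*k').+1 <= fib (2*j).+1 by apply: fib_mono; lia.
have [B1 _] := Bnd hb hv j.
have := closed_top hc; have := hb j.+1.
case e: (f j.+1) => [|[|[|x]]] // _ _; first lia.
have hn : f j.+1 != 0 by rewrite e.
have := IH (closed_down hc hn); lia.
Qed.

Lemma LB f a d : (forall t, a < t <= a + d -> 0 < f t) ->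
  V f a + fib (2*(a+d)).+1 <= V f (a+d) + fib (2*a).+1.
Proof.
elim: d => [|d IH] H; first by rewrite addn0.
rewrite addnS VS.
have h1 : 0 < f (a+d).+1 by apply: H; lia.
have h2 := IH (fun t ht => H t ltac:(lia)).
rewrite (_ : 2 * (a + d).+1 = (2*(a+d)).+2); last lia.
rewrite (fibSS (2*(a+d)).+1).
have := leq_pmull (fib (2 * (a + d)).+2) h1; lia.
Qed.
Lemma hCG n i : cg n i != 0 -> 0 < i <= n.
Proof.
have [_ f0 fz _ _] := cg_spec n => h.
case: i h => [|i] h; first by rewrite f0 in h.
case: (leqP i.+1 n) => // hi; by rewrite fz in h.
Qed.

Theorem lemma3p6 (k l : nat) (hk : 1 <= k) (hl : 1 <= l) (n : nat) :
  (A k n /\ is_max (CG n) (fib (2 * k + 2 * l))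
         /\ is_max (CG2 n) (fib (2 * k + 2 * l)))
  <->
  (exists m, A k m /\ m <= \sum_(0 <= i < l) fib (2 * k + 2 * i)
             /\ n = m + 2 * fib (2 * k + 2 * l)).
Proof.
case: k hk => // k' _; case: l hl => // l' _.
rewrite -!mulnDr.
have hS := sum_id k' l'.+1.
set S := \sum_(0 <= i < l'.+1) fib (2 * k'.+1 + 2 * i) in hS *.
have eK : k'.+1 + l'.+1 = (k' + l'.+1).+1 by lia.
rewrite eK; set j := k' + l'.+1 in hS eK *.
have eF : 2 * j.+1 = (2*j).+2 by lia.
have kj : k' < j by rewrite /j; lia.
have fpk := fib_pos (ltn0Sn (2*k')).
split.
- move=> [[n0 hmin] [hmax hmax2]].
  have [fb f0 fz fv fV] := cg_spec n.
  rewrite /CG in hmin hmax; rewrite /CG2 in hmax2.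
  move: hmin => /(@min_iff (fun i => cg n i != 0) n _ (@hCG n)) [hk hk'].
  move: hmax => /(@max_iff (fun i => cg n i != 0) n _ (@hCG n)) [hK hK'].
  have hCG2 : forall i, cg n i == 2 -> 0 < i <= n.
    by move=> i /eqP h; apply: hCG; rewrite h.
  move: hmax2 => /(@max_iff (fun i => cg n i == 2) n _ hCG2) [/eqP hK2 _].
  set f := cg n in fb f0 fz fv fV hk hk' hK hK' hK2 *.
  have fV' : V f n = n by apply: fV; exists j.+1; apply/eqP.
  have fzK : forall i, j.+1 < i -> f i = 0.
    move=> i hi; case: (eqVneq (f i) 0) => // h; have := hK' i h; lia.
  have Vn : V f n = V f j + 2 * fib (2 * j.+1) by rewrite (V_stable fz fzK) VS hK2.
  exists (V f j); split; last split; last by rewrite -Vn fV'.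
  + pose g := fun i => if i == j.+1 then 0 else f i.
    have gz : forall i, j < i -> g i = 0.
      by move=> i hi; rewrite /g; case: eqP => // ne; apply: fzK; lia.
    have Vg : V g j = V f j.
      by apply: V_ext => i hi; rewrite /g; case: eqP => // e; lia.
    have gle : forall i, g i != 0 -> i <= V f j.
      move=> i hi; have hij : i <= j by case: (leqP i j) => // h; rewrite gz in hi.
      have gf : g i = f i by rewrite /g; case: eqP => // e; lia.
      rewrite gf in hi; have := V_ge f hij; have := fib2_ge i.
      have := @leq_pmull (fib (2*i)) (f i) ltac:(by rewrite lt0n).
      lia.
    have gzm : forall i, V f j < i -> g i = 0.
      by move=> i hi; case: (eqVneq (g i) 0) => // h; have := gle i h; lia.
    have cgm : cg (V f j) = g.
      apply: cg_char.
      * by rewrite /g f0.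
      * by move=> i; rewrite /g; case: eqP.
      * exact: gzm.
      * move=> i i' hii' e1 e2.
        have [e1' ne1] : f i = 2 /\ i != j.+1 by move: e1; rewrite /g; case: eqP.
        have [e2' ne2] : f i' = 2 /\ i' != j.+1 by move: e2; rewrite /g; case: eqP.
        have [t [ht ft]] := fv i i' hii' e1' e2'.
        by exists t; split => //; rewrite /g; case: eqP.
      * by rewrite (V_stable gzm gz) Vg.
    rewrite /A /CG cgm.
    have hH : forall i, g i != 0 -> 0 < i <= V f j.
      move=> i h; rewrite gle // andbT; case: i h => //; by rewrite /g f0.
    split.
      have := V_ge f kj; have := @leq_pmull (fib (2*k'.+1)) (f k'.+1) ltac:(by rewrite lt0n).
      have := @fib_pos (2*k'.+1) ltac:(lia). lia.
    apply/(@min_iff (fun i => g i != 0) (V f j) _ hH); split.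
      have ne : (k'.+1 == j.+1) = false by apply/eqP; lia.
      by rewrite /g ne.
    move=> i; rewrite /g; case: (i == j.+1) => //; exact: hk'.
  + have hz : forall i, i <= k' -> f i = 0.
      by move=> i hi; case: (eqVneq (f i) 0) => // h; have := hk' i h; lia.
    have hc : closed f (k' + (j - k')) by rewrite subnKC ?(ltnW kj) //; exact: valid_closed.
    have := B2' fb fv hz hc; rewrite subnKC ?(ltnW kj) //; lia.
- move=> [m [[m0 hmin] [hmS ->]]].
  have [fb f0 fz fv fV] := cg_spec m.
  rewrite /CG in hmin.
  move: hmin => /(@min_iff (fun i => cg m i != 0) m _ (@hCG m)) [hk hk'].
  set f := cg m in fb f0 fz fv fV hk hk' *.
  have fV' : V f m = m by apply: fV; exists k'.+1; apply/eqP.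
  have e3 := fibSS (2*j); have e4 := fibSS (2*j).+1.
  have fzj : forall i, j < i -> f i = 0.
    move=> i hi; case: (eqVneq (f i) 0) => // hne.
    have him := hCG hne; have := V_ge f (proj2 (andP him)).
    have : fib (2 * j.+1) <= fib (2 * i) by apply: fib_mono; lia.
    have := @leq_pmull (fib (2*i)) (f i) ltac:(by rewrite lt0n).
    rewrite eF; lia.
  have mE : V f j = m by rewrite (V_stable fzj fz).
  have hcl : closed f j.
    move=> i hi e.
    case: (boolP [exists t : 'I_j.+1, (i < t) && (f t == 0)]) => [/existsP [t /andP[h1 /eqP h2]]|/existsPn hn].
      by exists t; split => //; rewrite h1 /= -ltnS ltn_ord.
    exfalso.
    have hpos : forall t, i < t <= i + (j - i) -> 0 < f t.
      move=> t ht; have ht' : t < j.+1 by lia.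
      have := hn (Ordinal ht') => /negP hnt; rewrite lt0n; apply/negP => /eqP h0.
      apply: hnt; rewrite /= h0 eqxx andbT; lia.
    have := LB hpos; rewrite subnKC //; clear hn.
    case: i hi e hpos => [|i'] hi e _; first by rewrite f0 in e.
    have := V_ge f (leqnn i'.+1); rewrite e.
    rewrite (_ : 2 * i'.+1 = (2*i').+2); last lia.
    rewrite (fibSS (2*i').+1); have := fib_le_S (2*i').+1.
    lia.
  pose h := fun i => if i == j.+1 then 2 else f i.
  have hzn : forall i, m + 2 * fib (2 * j.+1) < i -> h i = 0.
    move=> i hi; rewrite /h; case: eqP => [e|ne]; last by apply: fz; lia.
    have := fib2_ge j.+1; lia.
  have hzj : forall i, j.+1 < i -> h i = 0.
    by move=> i hi; rewrite /h; case: eqP => [e|ne]; [lia | apply: fzj; lia].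
  have cgn : cg (m + 2 * fib (2 * j.+1)) = h.
    apply: cg_char.
    * by rewrite /h f0.
    * by move=> i; rewrite /h; case: eqP.
    * exact: hzn.
    * move=> i i' hii' e1 e2.
      case: (eqVneq i' j.+1) => hi'.
        have [e1' ne1] : f i = 2 /\ i != j.+1.
          by move: e1; rewrite /h; case: eqP => // ee; lia.
        have [t [ht ft]] := hcl i ltac:(lia) e1'.
        by exists t; split; [lia | rewrite /h; case: eqP => // ee; lia].
      have e2' : f i' = 2 by move: e2; rewrite /h (negbTE hi').
      have hij : i' <= j by case: (leqP i' j) => // hh; rewrite fzj in e2'.
      have e1' : f i = 2 by move: e1; rewrite /h; case: eqP => // ee; lia.
      have [t [ht ft]] := fv i i' hii' e1' e2'.
      by exists t; split; [lia | rewrite /h; case: eqP => // ee; lia].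
    * rewrite (V_stable hzn hzj) VS (V_ext (g := f)); last first.
        by move=> i hi; rewrite /h; case: eqP => // ee; lia.
      by rewrite mE /h eqxx.
  have hH : forall i, h i != 0 -> 0 < i <= m + 2 * fib (2 * j.+1).
    move=> i hne; apply/andP; split.
      by case: i hne => //; rewrite /h f0.
    by case: (leqP i (m + 2 * fib (2 * j.+1))) => // hh; rewrite hzn in hne.
  have hH2 : forall i, h i == 2 -> 0 < i <= m + 2 * fib (2 * j.+1).
    by move=> i /eqP e; apply: hH; rewrite e.
  rewrite /A /CG /CG2 cgn; split; [split|split].
  + have := fib_pos (ltn0Sn (2*j).+1); rewrite eF; lia.
  + apply/(@min_iff (fun i => h i != 0) _ _ hH); split.
      have ne : (k'.+1 == j.+1) = false by apply/eqP; lia.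
      by rewrite /h ne.
    move=> i; rewrite /h; case: (eqVneq i j.+1) => [->|_]; [lia | exact: hk'].
  + apply/(@max_iff (fun i => h i != 0) _ _ hH); split; first by rewrite /h eqxx.
    move=> i; rewrite /h; case: (eqVneq i j.+1) => [->//|_] hne.
    by case: (leqP i j.+1) => // hh; rewrite fzj in hne; lia.
  + apply/(@max_iff (fun i => h i == 2) _ _ hH2); split; first by rewrite /h eqxx.
    move=> i; rewrite /h; case: (eqVneq i j.+1) => [->//|_] /eqP hne.
    by case: (leqP i j.+1) => // hh; rewrite fzj in hne; lia.
Qed.
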